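(* Let $G$ be a polymer graph obtained by point-attaching from the monomer units $G_1,\ldots,G_k$. Then $$SO(G)>\sum_{i=1}^k SO(G_i).$$
   Context: All graphs are finite and simple. For a graph $G$ and a vertex $u$, $d_u$ denotes the degree of $u$ in $G$. The Sombor index of $G$ is $SO(G)=\sum_{uv\in E(G)}\sqrt{d_u^2+d_v^2}$. A polymer graph obtained by point-attaching from pairwise disjoint connected graphs $G_1,\ldots,G_k$ (the monomer units) is a connected graph constructed as follows: select a vertex of $G_1$ and a vertex of $G_2$ and identify these two vertices; then continue in this manner inductively, each time identifying a vertex of the graph built so far with a vertex of the next monomer unit. *)

(* Defs.v *)
From HB Require Import structures.
From mathcomp Require Import all_boot all_order all_algebra.
Set Implicit Arguments. Unset Strict Implicit. Unset Printing Implicit Defensive.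
Import Order.TTheory GRing.Theory Num.Theory.
Local Open Scope ring_scope.

Definition simple_graph (T : finType) (e : rel T) : Prop :=
  symmetric e /\ irreflexive e.

Definition graph_connected (T : finType) (e : rel T) : Prop :=
  forall x y : T, connect e x y.

Definition deg (T : finType) (e : rel T) (x : T) : nat := #|[set y | e x y]|.

(* Sombor index: sum over edges uv of sqrt(d_u^2 + d_v^2).  Each (undirected)
   edge of a simple graph is counted twice among ordered adjacent pairs,
   hence the division by 2. *)
Definition sombor (R : rcfType) (T : finType) (e : rel T) : R :=
  (\sum_(x : T) \sum_(y : T | e x y)
      Num.sqrt ((deg e x)%:R ^+ 2 + (deg e y)%:R ^+ 2)) / 2%:R.

(* G = (V, e) is the polymer graph obtained by point-attaching the monomer
   units G_i = (T i, E i), i = 0..k-1 (in this order): f i : T i -> V is the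
   canonical map of the i-th unit into the glued graph. *)
Definition point_attaching (k : nat) (T : 'I_k -> finType)
    (E : forall i, rel (T i)) (V : finType) (e : rel V)
    (f : forall i, T i -> V) : Prop :=
  [/\ forall i, injective (f i),
      forall i : 'I_k, (0 < i)%N ->
        #|[set v | (v \in codom (f i)) &&
                   [exists j : 'I_k, (j < i)%N && (v \in codom (f j))]]| = 1%N,
      (forall v : V, exists i, v \in codom (f i)) &
      (forall x y : V, e x y <-> exists i, exists a b, [/\ E i a b, f i a = x & f i b = y])].

(* Main.v *)
Require Import Defs.
From HB Require Import structures.
From mathcomp Require Import all_boot all_order all_algebra.
Import Order.TTheory GRing.Theory Num.Theory.
Local Open Scope ring_scope.

Lemma sum_lt (R : rcfType) (I : finType) (P : pred I) (F G : I -> R) i0 :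
  P i0 -> (forall i, P i -> F i <= G i) -> F i0 < G i0 ->
  \sum_(i | P i) F i < \sum_(i | P i) G i.
Proof.
move=> Pi0 FG FGi0.
rewrite (bigD1 i0) //= [X in _ < X](bigD1 i0) //=.
apply: ltr_leD => //; apply: ler_sum => i /andP[Pi _]; exact: FG.
Qed.

Lemma sq_le (R : rcfType) (m1 n1 m2 n2 : nat) : (m1 <= m2)%N -> (n1 <= n2)%N ->
  Num.sqrt (m1%:R ^+ 2 + n1%:R ^+ 2 : R) <= Num.sqrt (m2%:R ^+ 2 + n2%:R ^+ 2).
Proof.
move=> h1 h2; rewrite -!natrX -!natrD ler_sqrt ?ler0n // ler_nat.
by apply: leq_add; rewrite leq_sqr.
Qed.

Lemma sq_lt (R : rcfType) (m1 n1 m2 n2 : nat) : (m1 < m2)%N -> (n1 <= n2)%N ->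
  Num.sqrt (m1%:R ^+ 2 + n1%:R ^+ 2 : R) < Num.sqrt (m2%:R ^+ 2 + n2%:R ^+ 2).
Proof.
move=> h1 h2; rewrite -!natrX -!natrD ltr_sqrt ?ltr_nat.
  by rewrite -ltn_sqr in h1; rewrite -leq_sqr in h2; exact: leq_add h1 h2.
rewrite ltr0n addn_gt0 expn_gt0 /=; apply/orP; left.
by rewrite orbF (leq_ltn_trans (leq0n m1) h1).
Qed.

Theorem mainTheorem1 (R : rcfType) (k : nat) (T : 'I_k -> finType)
    (E : forall i, rel (T i)) (V : finType) (e : rel V)
    (f : forall i, T i -> V) :
  (2 <= k)%N ->
  (forall i, [/\ simple_graph (E i), graph_connected (E i) & (1 < #|T i|)%N]) ->
  point_attaching E e f ->
  \sum_(i < k) sombor R (E i) < sombor R e.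
Proof.
move=> k2 Hg [finj Hshare Hcov Hedge].
pose g := fun x y : V => Num.sqrt ((deg e x)%:R ^+ 2 + (deg e y)%:R ^+ 2 : R).
have g0 x y : 0 <= g x y by apply: sqrtr_ge0.
have Hdeg i a : (deg (E i) a <= deg e (f i a))%N.
  rewrite /deg -(card_imset _ (finj i)); apply: subset_leq_card.
  apply/subsetP => y /imsetP [b]; rewrite inE => Eab ->; rewrite inE.
  by apply/Hedge; exists i, a, b.
pose Sh (i : 'I_k) := [set v | (v \in codom (f i)) &&
                   [exists j : 'I_k, (j < i)%N && (v \in codom (f j))]].
have mem_share (i j : 'I_k) (x : V) : (j < i)%N -> x \in codom (f i) -> x \in codom (f j) -> x \in Sh i.
  move=> ji xi xj; rewrite inE xi /=; apply/existsP; exists j; by rewrite ji.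
have share_eq (i : 'I_k) (x y : V) : (0 < i)%N -> x \in Sh i -> y \in Sh i -> x = y.
  move=> i0; have /eqP/cards1P [z hz] := Hshare i i0; rewrite /Sh hz.
  by rewrite !in_set1 => /eqP -> /eqP ->.
have irr (i : 'I_k) (a : T i) : E i a a = false by case: (Hg i) => [[_ ->]].
have key (i j : 'I_k) (a b : T i) (c d : T j) : (j < i)%N -> E i a b -> f i a = f j c -> f i b = f j d -> False.
  move=> ji Eab fa fb.
  have i0 : (0 < i)%N by apply: leq_ltn_trans ji.
  have h1 : f i a \in Sh i by apply: (mem_share _ j _ ji (codom_f (f i) a)); rewrite fa codom_f.
  have h2 : f i b \in Sh i by apply: (mem_share _ j _ ji (codom_f (f i) b)); rewrite fb codom_f.
  have := share_eq _ _ _ i0 h1 h2 => /finj eab.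
  by rewrite eab irr in Eab.
have Hone (i j : 'I_k) (a b : T i) (c d : T j) : E i a b -> E j c d -> f i a = f j c -> f i b = f j d -> i = j.
  move=> Eab Ecd fa fb; case: (ltngtP i j) => [ij|ji|/val_inj //].
    by case: (key j i c d a b ij Ecd).
  by case: (key i j a b c d ji Eab).
have nb (i : 'I_k) (a : T i) : exists b, E i a b.
  case: (Hg i) => [[_ _] Hc /card_gt1P [x [y [_ _ xy]]]].
  have [z za] : exists z, z != a.
    case: (eqVneq x a) => [xa|]; last by exists x.
    by exists y; rewrite -xa eq_sym.
  move: (Hc a z) => /connectP [[|b p] /= pth zl]; first by rewrite zl eqxx in za.
  by exists b; case/andP: pth.
pose i0 : 'I_k := Ordinal (ltnW k2).
pose i1 : 'I_k := Ordinal k2.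
have i01 : (i0 < i1)%N by [].
have [v vS] : exists v, v \in Sh i1.
  have /eqP/cards1P [z hz] := Hshare i1 isT; rewrite /Sh.
  by exists z; rewrite hz set11.
have vS' := vS.
move: vS'; rewrite inE => /andP [/codomP [a1 va1] /existsP [j /andP [j1 /codomP [a0 va0]]]].
have ji0 : j = i0 by apply: val_inj => /=; move: j1; rewrite ltnS leqn0 => /eqP.
subst j.
have [b0 Eab0] := nb i0 a0.
have [b1 Eab1] := nb i1 a1.
have Hdegs : (deg (E i0) a0 < deg e (f i0 a0))%N.
  rewrite /deg -(card_imset _ (finj i0)).
  apply: (@leq_trans #|f i1 b1 |: (f i0 @: [set b | E i0 a0 b])|).
    rewrite cardsU1; case: (boolP (_ \in _)) => //= /imsetP [c _ hc].
    have : f i1 b1 \in Sh i1 by apply: (mem_share i1 i0 _ i01 (codom_f (f i1) b1)); rewrite hc codom_f.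
    move/(share_eq i1 _ _ isT)/(_ vS); rewrite va1 => /finj eb.
    by rewrite eb irr in Eab1.
  apply: subset_leq_card; apply/subsetP => y; rewrite in_setU1 => /orP [/eqP -> | /imsetP [b]].
    by rewrite inE -va0 va1; apply/Hedge; exists i1, a1, b1.
  by rewrite inE => Eb ->; rewrite inE; apply/Hedge; exists i0, a0, b.
rewrite /sombor -mulr_suml ltr_pM2r ?invr_gt0 ?ltr0n //.
apply: (@lt_le_trans _ _ (\sum_(i < k) \sum_(a : T i) \sum_(b | E i a b) g (f i a) (f i b))).
  apply: (@sum_lt _ _ xpredT _ _ i0) => // [i _|].
    by apply: ler_sum => a _; apply: ler_sum => b Eab; apply: sq_le.
  apply: (@sum_lt _ _ xpredT _ _ a0) => // [a _|].
    by apply: ler_sum => b Eab; apply: sq_le.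
  apply: (@sum_lt _ _ _ _ _ b0) => // [b Eab|].
    by apply: sq_le.
  by apply: sq_lt.
pose S (i : 'I_k) := (fun p : T i * T i => (f i p.1, f i p.2)) @: [set p : T i * T i | E i p.1 p.2].
have HZ i : \sum_(a : T i) \sum_(b | E i a b) g (f i a) (f i b) = \sum_(q in S i) g q.1 q.2.
  rewrite pair_big_dep big_imset /=.
    by apply: eq_bigl => p; rewrite inE.
  move=> [p1 p2] [q1 q2] _ _ [] /finj -> /finj -> //.
rewrite (eq_bigr _ (fun i _ => HZ i)).
rewrite [X in _ <= X]pair_big_dep /=.
rewrite (eq_bigr (fun i => \sum_q (if q \in S i then g q.1 q.2 else 0))); last first.
  by move=> i _; rewrite big_mkcond.
rewrite exchange_big /= [X in _ <= X]big_mkcond /=.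
apply: ler_sum => q _.
case: (pickP (fun i => q \in S i)) => [i qi | none].
  rewrite (bigD1 i) //= qi big1 ?addr0.
    move: qi => /imsetP [p]; rewrite inE => Ep ->.
    by have -> : e (f i p.1) (f i p.2) by apply/Hedge; exists i, p.1, p.2.
  move=> j /negbTE ji; case: ifP => // qj; exfalso.
  move: qi qj => /imsetP [p]; rewrite inE => Ep -> /imsetP [p']; rewrite inE => Ep' [h1 h2].
  by have := Hone _ _ _ _ _ _ Ep Ep' h1 h2; move/eqP; rewrite eq_sym ji.
rewrite big1 => [|j _]; last by rewrite none.
by case: ifP => _ //; apply: g0.
Qed.
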